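(* Let $n\ge 3$ be odd. Then the row span $[C]$ of the cyclic matrix $C$ is the unique minimizer of $E$ on $Gr^{>0}(2,n)$.
   Context: For a real $2\times n$ matrix $X$ and $1\le i<j\le n$, $\Delta_{i,j}(X)$ is the determinant of the $2\times2$ submatrix of columns $i,j$. $Gr^{>0}(2,n)$ is the set of 2-dimensional subspaces of $\mathbb{R}^n$ having a spanning $2\times n$ matrix $X$ (rows spanning the subspace) with $\Delta_{i,j}(X)>0$ for all $i<j$; $E(x)=\max_{i<j}\Delta_{i,j}(X)/\min_{i<j}\Delta_{i,j}(X)$ (independent of the choice of $X$). The cyclic matrix $C$ is the $2\times n$ matrix whose $m$-th column is $(\cos((m-1)\pi/n),\sin((m-1)\pi/n))^T$, $m=1,\dots,n$. *)

(* Defs.v *)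
From HB Require Import structures.
From mathcomp Require Import all_boot all_order all_algebra.
From mathcomp Require Import all_classical all_reals all_analysis.
Set Implicit Arguments. Unset Strict Implicit. Unset Printing Implicit Defensive.
Import Order.TTheory GRing.Theory Num.Theory.
Local Open Scope ring_scope.

Definition plucker (R : realType) (n : nat) (X : 'M[R]_(2, n)) (i j : 'I_n) : R :=
  X 0 i * X 1 j - X 0 j * X 1 i.

(* X spans a point of Gr^{>0}(2,n): all Delta_{i,j}(X) > 0 for i < j. *)
Definition totally_positive (R : realType) (n : nat) (X : 'M[R]_(2, n)) : Prop :=
  forall i j : 'I_n, (i < j)%N -> 0 < plucker X i j.

(* max and min of Delta_{i,j}(X) over i < j.  The min is started at the max,
   which does not change its value since the index set is nonempty when n >= 2. *)
Definition max_plucker (R : realType) (n : nat) (X : 'M[R]_(2, n)) : R :=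
  \big[Num.max/0]_(p : 'I_n * 'I_n | (p.1 < p.2)%N) plucker X p.1 p.2.

Definition min_plucker (R : realType) (n : nat) (X : 'M[R]_(2, n)) : R :=
  \big[Num.min/max_plucker X]_(p : 'I_n * 'I_n | (p.1 < p.2)%N) plucker X p.1 p.2.

Definition Eratio (R : realType) (n : nat) (X : 'M[R]_(2, n)) : R :=
  max_plucker X / min_plucker X.

(* Cyclic matrix: column m (1-based) is (cos((m-1)pi/n), sin((m-1)pi/n)).
   With 0-based column index j this is angle j*pi/n. *)
Definition cyclicC (R : realType) (n : nat) : 'M[R]_(2, n) :=
  \matrix_(i < 2, j < n)
    (if i == 0 then cos ((j%:R * pi) / n%:R) else sin ((j%:R * pi) / n%:R)).

(* Main.v *)
Require Import Defs.
From HB Require Import structures.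
From mathcomp Require Import all_boot all_order all_algebra.
From mathcomp Require Import all_classical all_reals all_analysis.
From mathcomp Require Import ring lra zify.
Import Order.TTheory GRing.Theory Num.Theory.
Local Open Scope ring_scope.

Definition sn (R : realType) (n d : nat) : R := sin ((d%:R * pi) / n%:R).
Lemma tD (R : realType) n a b : ((a + b)%N%:R * pi) / n%:R = (a%:R * pi) / n%:R + (b%:R * pi) / n%:R :> R.
Proof. by rewrite natrD !mulrDl. Qed.


Lemma sn_gt0 (R : realType) n d : (0 < d)%N -> (d < n)%N -> 0 < sn R n d.
Proof.
move=> d0 dn; apply: sin_gt0_pi.
have n0 : (0 : R) < n%:R by rewrite ltr0n; apply: leq_trans dn.
apply/andP; split.
  by apply: divr_gt0 => //; apply: mulr_gt0; [rewrite ltr0n|exact: pi_gt0].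
by rewrite ltr_pdivrMr // mulrC ltr_pM2l ?pi_gt0 // ltr_nat.
Qed.

Lemma sn0 (R : realType) n : sn R n 0 = 0.
Proof. by rewrite /sn mul0r mul0r sin0. Qed.

Lemma snn (R : realType) n : (0 < n)%N -> sn R n n = 0.
Proof.
move=> n0; rewrite /sn mulrC mulrA mulVf ?mul1r ?sinpi //.
by rewrite pnatr_eq0 -lt0n.
Qed.

Lemma snB (R : realType) n d : (0 < n)%N -> (d <= n)%N -> sn R n (n - d) = sn R n d.
Proof.
move=> n0 dn; rewrite /sn natrB // mulrBl mulrBl.
have -> : n%:R * pi / n%:R = pi :> R.
  by rewrite mulrC mulrA mulVf ?mul1r // pnatr_eq0 -lt0n.
by rewrite sinB sinpi cospi mul0r mulN1r opprK add0r.
Qed.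
Lemma sinDB (R : realType) (x y : R) : sin (x + y) * sin (x - y) = sin x ^+ 2 - sin y ^+ 2.
Proof.
rewrite sinD sinB.
have hx := cos2sin2 x; have hy := cos2sin2 y.
have -> : (sin x * cos y + cos x * sin y) * (sin x * cos y - cos x * sin y)
  = sin x ^+ 2 * cos y ^+ 2 - cos x ^+ 2 * sin y ^+ 2 by ring.
rewrite hx hy; ring.
Qed.

Lemma sn_id (R : realType) n d : (0 < d)%N ->
  sn R n d ^+ 2 - sn R n d.+1 * sn R n d.-1 = sn R n 1 ^+ 2.
Proof.
case: d => [//|e] _ /=.
rewrite /sn.
have h1 : ((e.+2)%:R * pi) / n%:R = ((e.+1)%:R * pi) / n%:R + (1%:R * pi) / n%:R :> R.
  by rewrite -tD addn1.
have h2 : (e%:R * pi) / n%:R = ((e.+1)%:R * pi) / n%:R - (1%:R * pi) / n%:R :> R.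
  by rewrite -[in RHS]addn1 tD addrK.
rewrite h1 h2 sinDB; ring.
Qed.

Lemma t_in (R : realType) n a : (0 < n)%N -> (a.*2 <= n)%N ->
  ((a%:R : R) * pi) / n%:R \in `[- (pi / 2), pi / 2].
Proof.
move=> n0 an.
have n0' : (0 : R) < n%:R by rewrite ltr0n.
rewrite in_itv /=; apply/andP; split.
  apply: (@le_trans _ _ 0); first by rewrite oppr_le0 divr_ge0 ?pi_ge0.
  by apply: divr_ge0; [apply: mulr_ge0; [exact: ler0n| exact: pi_ge0]|exact: ltW].
rewrite ler_pdivrMr //.
have h : (a%:R * 2 <= n%:R :> R) by rewrite -natrM ler_nat muln2.
have hp := pi_gt0 R.
nra.
Qed.

Lemma sn_le (R : realType) n a b : (0 < n)%N -> (a <= b)%N -> (b.*2 <= n)%N ->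
  sn R n a <= sn R n b.
Proof.
move=> n0 ab bn.
have an : (a.*2 <= n)%N by apply: leq_trans bn; rewrite leq_double.
rewrite /sn; case: (ltnP a b) => [lab|lba].
  apply/ltW; rewrite ltr_sin ?t_in //.
  rewrite ltr_pM2r ?invr_gt0 ?ltr0n // ltr_pM2r ?pi_gt0 // ltr_nat //.
by have -> : a = b by apply/eqP; rewrite eqn_leq ab lba.
Qed.

Lemma sn_bounds (R : realType) n d : odd n -> (0 < d)%N -> (d < n)%N ->
  sn R n 1 <= sn R n d /\ sn R n d <= sn R n n./2.
Proof.
move=> on d0 dn.
have hn : n = (n./2).*2.+1 by rewrite -{1}(odd_double_half n) on.
have n0 : (0 < n)%N by rewrite hn.
have k2 : ((n./2).*2 <= n)%N by rewrite {2}hn.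
case: (leqP d n./2) => dk.
  split; apply: sn_le => //; apply: leq_trans k2; rewrite leq_double //.
rewrite -(snB R n d n0 (ltnW dn)).
have e1 : (0 < n - d)%N by rewrite subn_gt0.
have e2 : (n - d <= n./2)%N.
  by rewrite {1}hn; lia.
split; apply: sn_le => //; apply: leq_trans k2; rewrite leq_double //.
Qed.

Lemma pluckerC (R : realType) n (i j : 'I_n) : (i <= j)%N ->
  plucker (cyclicC R n) i j = sn R n (j - i).
Proof.
move=> ij; rewrite /plucker /cyclicC !mxE /= /sn natrB // !mulrBl sinB; ring.
Qed.

Lemma maxPC (R : realType) n : (3 <= n)%N -> odd n ->
  max_plucker (cyclicC R n) = sn R n n./2.
Proof.
move=> n3 on.
have hn : n = (n./2).*2.+1 by rewrite -{1}(odd_double_half n) on.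
have k0 : (0 < n./2)%N by move: n3; rewrite hn; lia.
have kn : (n./2 < n)%N by rewrite {2}hn; lia.
apply/eqP; rewrite eq_le; apply/andP; split.
  rewrite /max_plucker; apply: bigmax_le; first exact: ltW (sn_gt0 R n _ k0 kn).
  move=> [i j] /= ij; rewrite pluckerC; last exact: ltnW.
  have hj := ltn_ord j.
  have [] := sn_bounds R n (j - i) on; [by rewrite subn_gt0 | lia | by []].
have i0 : (0 < n)%N by lia.
pose p := (Ordinal i0, Ordinal kn).
have := @le_bigmax_cond _ _ _ 0 p (fun p : 'I_n * 'I_n => (p.1 < p.2)%N)
  (fun p => plucker (cyclicC R n) p.1 p.2) k0.
rewrite /= pluckerC /=; last exact: ltnW.
by rewrite subn0.
Qed.

Lemma minPC (R : realType) n : (3 <= n)%N -> odd n ->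
  min_plucker (cyclicC R n) = sn R n 1.
Proof.
move=> n3 on.
have hn : n = (n./2).*2.+1 by rewrite -{1}(odd_double_half n) on.
have k0 : (0 < n./2)%N by move: n3; rewrite hn; lia.
have kn : (n./2 < n)%N by rewrite {2}hn; lia.
have i0 : (0 < n)%N by lia.
have i1 : (1 < n)%N by lia.
apply/eqP; rewrite eq_le; apply/andP; split.
  pose p := (Ordinal i0, Ordinal i1).
  have := @bigmin_le_cond _ _ _ (max_plucker (cyclicC R n)) p
    (fun p : 'I_n * 'I_n => (p.1 < p.2)%N)
    (fun p => plucker (cyclicC R n) p.1 p.2) isT.
  rewrite /= pluckerC /=; last exact: ltnW.
  by rewrite subn0.
rewrite /min_plucker; apply: le_bigmin.
  rewrite maxPC //; have [] := sn_bounds R n n./2 on k0 kn; by [].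
move=> [i j] /= ij; rewrite pluckerC; last exact: ltnW.
have hj := ltn_ord j.
have [] := sn_bounds R n (j - i) on; [by rewrite subn_gt0 | lia | by []].
Qed.

Definition geo (R : realType) (n : nat) (f : nat -> R) : R :=
  expR ((\sum_(s < n) ln (f s)) / n%:R).
Arguments geo {R}.

Lemma posE (R : realType) (x : R) : 0 < x -> x \in Num.pos.
Proof. by rewrite posrE. Qed.
Arguments posE {R x}.

Lemma sumc (R : realType) n (c : R) : \sum_(s < n) c = c *+ n.
Proof. by rewrite sumr_const card_ord. Qed.

Lemma geo_ext (R : realType) n (f g : nat -> R) :
  (forall s, (s < n)%N -> f s = g s) -> geo n f = geo n g.
Proof.
move=> h; rewrite /geo (eq_bigr (fun s : 'I_n => ln (g s))) // => i _.
by rewrite h.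
Qed.

Lemma geo_gt0 (R : realType) n (f : nat -> R) : 0 < geo n f.
Proof. exact: expR_gt0. Qed.
Arguments geo_gt0 {R}.

Lemma geo_mul (R : realType) n (f g : nat -> R) :
  (forall s, (s < n)%N -> 0 < f s) -> (forall s, (s < n)%N -> 0 < g s) ->
  geo n (fun s => f s * g s) = geo n f * geo n g.
Proof.
move=> hf hg; rewrite /geo -expRD -mulrDl -big_split /=.
by rewrite (eq_bigr (fun s : 'I_n => ln (f s) + ln (g s))) // => i _; rewrite lnM // posrE; [exact: hf | exact: hg].
Qed.

Lemma sum_shift1 (R : realType) n (h : nat -> R) : h n = h 0%N ->
  \sum_(s < n) h s.+1 = \sum_(s < n) h s.
Proof.
case: n => [|n] hn; first by rewrite !big_ord0.
by rewrite big_ord_recr big_ord_recl /= hn addrC.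
Qed.

Lemma geo_shift (R : realType) n (f : nat -> R) d :
  (forall s, f (s + n)%N = f s) -> geo n (fun s => f (s + d)%N) = geo n f.
Proof.
move=> hp; elim: d => [|d IH]; first by apply: geo_ext => s _; rewrite addn0.
rewrite -IH /geo.
have := @sum_shift1 R n (fun s => ln (f (s + d)%N)).
rewrite /= add0n addnC hp => <- //.
by rewrite (eq_bigr (fun s : 'I_n => ln (f (s + d).+1))) // => i _; rewrite addnS.
Qed.

Lemma geo_ge (R : realType) n (f : nat -> R) m : (0 < n)%N -> 0 < m ->
  (forall s, (s < n)%N -> m <= f s) -> m <= geo n f.
Proof.
move=> n0 m0 h; rewrite -[m in m <= _](lnK (posE m0)) /geo ler_expR.
have n0' : (0 : R) < n%:R by rewrite ltr0n.
rewrite ler_pdivlMr // mulr_natr -sumc.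
apply: ler_sum => i _; rewrite ler_ln ?posE //; first exact: h.
exact: lt_le_trans (h _ (ltn_ord i)).
Qed.

Lemma geo_geE (R : realType) n (f : nat -> R) m : (0 < n)%N -> 0 < m ->
  (forall s, (s < n)%N -> m <= f s) -> geo n f = m -> forall s, (s < n)%N -> f s = m.
Proof.
move=> n0 m0 h he s sn.
have n0' : (0 : R) < n%:R by rewrite ltr0n.
have e1 : \sum_(i < n) ln (f i) = ln m *+ n.
  have := congr1 (@ln R) he; rewrite /geo expRK => e.
  by rewrite -mulr_natr -e mulfVK // gt_eqF.
have e2 : \sum_(i < n) (ln (f i) - ln m) = 0.
  by rewrite sumrB e1 sumc subrr.
have hpos : forall i : 'I_n, true -> 0 <= ln (f i) - ln m.
  move=> i _; rewrite subr_ge0 ler_ln ?posE ?h //.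
  exact: lt_le_trans (h _ (ltn_ord i)).
have := psumr_eq0P hpos e2 (i := Ordinal sn) isT.
move/eqP; rewrite subr_eq0 => /eqP e3.
have fs0 : 0 < f s by exact: lt_le_trans (h _ sn).
by rewrite -(lnK (posE fs0)) /= e3 lnK // posE.
Qed.

Lemma geo_le (R : realType) n (f : nat -> R) M : (0 < n)%N ->
  (forall s, (s < n)%N -> 0 < f s) ->
  (forall s, (s < n)%N -> f s <= M) -> geo n f <= M.
Proof.
move=> n0 hp h.
have M0 : 0 < M by exact: lt_le_trans (hp _ n0) (h _ n0).
rewrite -[M in _ <= M](lnK (posE M0)) /geo ler_expR.
have n0' : (0 : R) < n%:R by rewrite ltr0n.
rewrite ler_pdivrMr // mulr_natr -sumc.
by apply: ler_sum => i _; rewrite ler_ln ?posE ?hp ?h.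
Qed.

Lemma geo_const (R : realType) n (f : nat -> R) c : (0 < n)%N -> 0 < c ->
  (forall s, (s < n)%N -> f s = c) -> geo n f = c.
Proof.
move=> n0 c0 h.
have n0' : (0 : R) < n%:R by rewrite ltr0n.
rewrite /geo (eq_bigr (fun _ => ln c)); last by move=> i _; rewrite h.
by rewrite sumc -[ln c *+ n]mulr_natr mulfK ?gt_eqF // lnK // posE.
Qed.

Lemma amgm {R : realType} {n : nat} {x : nat -> R} : (0 < n)%N ->
  (forall s, (s < n)%N -> 0 < x s) ->
  geo n x <= (\sum_(s < n) x s) / n%:R /\
  (geo n x = (\sum_(s < n) x s) / n%:R -> forall s, (s < n)%N -> x s = (\sum_(s < n) x s) / n%:R).
Proof.
move=> n0 hp.
have n0' : (0 : R) < n%:R by rewrite ltr0n.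
have S0 : 0 < \sum_(s < n) x s.
  rewrite (bigD1 (Ordinal n0)) //=.
  apply: ltr_pwDl; first exact: hp.
  by apply: sumr_ge0 => i _; apply/ltW/hp.
set S := \sum_(s < n) x s in S0 *.
set a := S / n%:R.
have a0 : 0 < a by apply: divr_gt0.
have et : forall s, (s < n)%N -> expR (ln (x s) - ln a) = x s / a.
  by move=> s sn; rewrite expRB !lnK ?posE ?hp.
have sx : \sum_(s < n) (x s / a) = n%:R.
  rewrite -mulr_suml -/S /a; field.
  by rewrite (gt_eqF S0) (gt_eqF n0').
pose t s := ln (x s) - ln a.
have hle : forall s, (s < n)%N -> 0 <= x s / a - 1 - t s.
  move=> s sn; rewrite -et //; have := expR_ge1Dx (t s).
  rewrite /t; lra.
have sum1 : \sum_(s < n) (x s / a - 1 - t s) = - \sum_(s < n) t s.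
  by rewrite !sumrB sx sumc subrr add0r.
have st : \sum_(s < n) t s <= 0.
  rewrite -oppr_ge0 -sum1; apply: sumr_ge0 => i _; exact: hle.
have st2 : \sum_(s < n) t s = \sum_(s < n) ln (x s) - ln a *+ n.
  by rewrite /t sumrB sumc.
split.
  rewrite -[a in _ <= a](lnK (posE a0)) /geo ler_expR ler_pdivrMr //.
  by rewrite mulr_natr -subr_le0 -st2.
move=> he.
have e1 : \sum_(s < n) ln (x s) = ln a *+ n.
  have := congr1 (@ln R) he; rewrite /geo expRK => e.
  by rewrite -[ln a *+ n]mulr_natr -e mulfVK // gt_eqF.
have e2 : \sum_(s < n) (x s / a - 1 - t s) = 0.
  by rewrite sum1 st2 e1 subrr oppr0.
move=> s sn.
have := psumr_eq0P (fun (i : 'I_n) (_ : true) => hle i (ltn_ord i)) e2 (i := Ordinal sn) isT.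
rewrite /= -et // => e3.
have t0 : t s = 0.
  have [//|tn0] := eqVneq (t s) 0.
  have := expR_gt1Dx tn0; rewrite /t in e3 tn0 *; lra.
have := et s sn; rewrite -/(t s) t0 expR0 => /esym e4.
have a1 : a != 0 by rewrite gt_eqF.
by rewrite -[x s](mulfVK a1) e4 mul1r.
Qed.

Lemma geo_super (R : realType) n (f g : nat -> R) : (0 < n)%N ->
  (forall s, (s < n)%N -> 0 < f s) -> (forall s, (s < n)%N -> 0 < g s) ->
  geo n f + geo n g <= geo n (fun s => f s + g s) /\
  (geo n (fun s => f s + g s) = geo n f + geo n g ->
   forall s, (s < n)%N -> f s / (f s + g s) =
      (\sum_(i < n) f i / (f i + g i)) / n%:R).
Proof.
move=> n0 hf hg.
have n0' : (0 : R) < n%:R by rewrite ltr0n.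
pose h s := f s + g s.
have hh : forall s, (s < n)%N -> 0 < h s by move=> s sn; rewrite /h addr_gt0 ?hf ?hg.
pose x s := f s / h s.
pose y s := g s / h s.
have hx : forall s, (s < n)%N -> 0 < x s by move=> s sn; rewrite /x divr_gt0 ?hf ?hh.
have hy : forall s, (s < n)%N -> 0 < y s by move=> s sn; rewrite /y divr_gt0 ?hg ?hh.
have ef : geo n f = geo n x * geo n h.
  rewrite -geo_mul //; apply: geo_ext => s sn; rewrite /x mulfVK // gt_eqF ?hh //.
have eg : geo n g = geo n y * geo n h.
  rewrite -geo_mul //; apply: geo_ext => s sn; rewrite /y mulfVK // gt_eqF ?hh //.
have sxy : (\sum_(s < n) x s) / n%:R + (\sum_(s < n) y s) / n%:R = 1.
  rewrite -mulrDl -big_split /= (eq_bigr (fun _ => 1)).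
    by rewrite sumc -[1 *+ n]mulr_natr mul1r mulfV // gt_eqF.
  move=> i _; rewrite /x /y -mulrDl mulfV // gt_eqF // hh //.
have [ax axE] := amgm n0 hx.
have [ay ayE] := amgm n0 hy.
have gh0 := geo_gt0 n h.
split.
  rewrite ef eg -mulrDl -[X in _ <= X]mul1r ler_pM2r // -sxy.
  exact: lerD.
move=> he.
have e1 : geo n x + geo n y = 1.
  have gh1 : geo n h != 0 by rewrite gt_eqF.
  apply: (mulIf gh1); rewrite mul1r mulrDl -ef -eg; exact/esym.
have e2 : geo n x = (\sum_(s < n) x s) / n%:R by lra.
exact: axE e2.
Qed.

Lemma ex_argmin {R : realType} (F : nat -> R) N :
  exists d, (1 <= d <= N.+1)%N /\ forall e, (1 <= e <= N.+1)%N -> F d <= F e.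
Proof.
elim: N => [|N [d [hd hmin]]].
  by exists 1%N; split => // e; rewrite -eqn_leq => /eqP <-.
case: (leP (F d) (F N.+2)) => h.
  exists d; split; first by move: hd; lia.
  move=> e he; case: (ltngtP e N.+2) => [lt|gt|->] //.
    by apply: hmin; move: he lt; lia.
  by move: he gt; lia.
exists N.+2; split; first by rewrite leqnn.
move=> e he; case: (ltngtP e N.+2) => [lt|gt|->] //.
  by apply: le_trans (ltW h) (hmin _ _); move: he lt; lia.
by move: he gt; lia.
Qed.

Lemma minprin (R : realType) n (r c : nat -> R) : (1 < n)%N ->
  c 0%N = 0 -> c n = 0 -> r 0%N = 0 -> r n = 0 ->
  (forall d, (0 < d < n)%N -> 0 < c d) ->
  (forall d, (0 < d < n)%N -> 0 < r d) ->
  (forall d, (0 < d < n)%N -> c d ^+ 2 - c d.+1 * c d.-1 = 1) ->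
  (forall d, (0 < d < n)%N -> 1 <= r d ^+ 2 - r d.+1 * r d.-1) ->
  forall d, (0 < d < n)%N -> c d <= r d.
Proof.
move=> n1 c0 cn r0 rn cpos rpos cid rid.
pose z d := r d / c d.
have [d0 [hd0 hmin]] := ex_argmin z (n - 2).
have hd0' : (0 < d0 < n)%N by move: hd0 n1; lia.
have rz : forall d, (0 < d < n)%N -> r d = z d * c d.
  by move=> d hd; rewrite /z mulfVK // gt_eqF ?cpos.
have zmin : forall d, (0 < d < n)%N -> z d0 <= z d.
  by move=> d hd; apply: hmin; move: hd n1; lia.
case: (leP 1 (z d0)) => hz.
  move=> d hd; rewrite rz //; rewrite -[X in X <= _]mul1r.
  rewrite ler_pM2r ?cpos //; exact: le_trans hz (zmin _ hd).
exfalso.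
have z0 : 0 < z d0 by rewrite /z divr_gt0 ?rpos ?cpos.
have nb : forall e, (e <= n)%N -> 0 <= z d0 * c e <= r e.
  move=> e he; case: (posnP e) => [->|e0]; first by rewrite c0 r0 mulr0 lexx.
  case: (ltngtP e n) he => // [en _|-> _]; last by rewrite cn rn mulr0 lexx.
  have he' : (0 < e < n)%N by rewrite e0 en.
  apply/andP; split; first by rewrite mulr_ge0 // ?ltW // cpos.
  rewrite rz // ler_pM2r ?cpos //; exact: zmin.
have /andP [p1 p2] := nb d0.+1 (ltac:(move: hd0'; lia)).
have /andP [m1 m2] := nb d0.-1 (ltac:(move: hd0'; lia)).
have hprod : (z d0 * c d0.+1) * (z d0 * c d0.-1) <= r d0.+1 * r d0.-1.
  by apply: ler_pM.
have h1 := rid _ hd0'.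
have h2 := cid _ hd0'.
rewrite (rz _ hd0') in h1.
have : z d0 ^+ 2 < 1 by rewrite expr2; nra.
nra.
Qed.

Lemma propag {R : realType} {n : nat} {r c : nat -> R} {d : nat} :
  (forall d, (0 < d < n)%N -> 0 < c d) ->
  (forall d, (0 < d < n)%N -> c d <= r d) ->
  c d ^+ 2 - c d.+1 * c d.-1 = 1 ->
  1 <= r d ^+ 2 - r d.+1 * r d.-1 ->
  (1 < d)%N -> (d.+1 < n)%N -> r d = c d ->
  r d.+1 = c d.+1 /\ r d.-1 = c d.-1.
Proof.
move=> cpos cle cid rid d1 dn rd.
have hp : (0 < d.+1 < n)%N by rewrite dn.
have hm : (0 < d.-1 < n)%N by move: d1 dn; lia.
have a1 := cpos _ hp; have a2 := cpos _ hm.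
have b1 := cle _ hp; have b2 := cle _ hm.
rewrite rd in rid.
have hprod : r d.+1 * r d.-1 <= c d.+1 * c d.-1 by lra.
split; apply/eqP; rewrite eq_le; apply/andP; split => //; nra.
Qed.

Lemma spread (R : realType) n k (r c : nat -> R) :
  n = k.*2.+1 -> (0 < k)%N ->
  (forall d, (0 < d < n)%N -> 0 < c d) ->
  (forall d, (0 < d < n)%N -> c d <= r d) ->
  (forall d, (0 < d < n)%N -> c d ^+ 2 - c d.+1 * c d.-1 = 1) ->
  (forall d, (0 < d < n)%N -> 1 <= r d ^+ 2 - r d.+1 * r d.-1) ->
  (forall d, (0 < d < n)%N -> r (n - d)%N = r d) ->
  (forall d, (0 < d < n)%N -> c (n - d)%N = c d) ->
  r k = c k -> forall d, (0 < d < n)%N -> r d = c d.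
Proof.
move=> hn k0 cpos cle cid rid rs cs rk.
have down : forall e, (e < k)%N -> r (k - e)%N = c (k - e)%N.
  elim=> [|e IH] ek; first by rewrite subn0.
  have d1 : (1 < k - e)%N by lia.
  have d2 : ((k - e).+1 < n)%N by lia.
  have hd : (0 < k - e < n)%N by lia.
  have [_ h] := propag cpos cle (cid _ hd) (rid _ hd) d1 d2 (IH (ltnW ek)).
  by have <- : ((k - e).-1 = k - e.+1)%N by lia.
move=> d hd; case: (leqP d k) => dk.
  by have := down (k - d)%N (ltac:(lia)); have -> : (k - (k - d))%N = d by lia.
rewrite -rs // -cs //.
by have := down (k - (n - d))%N (ltac:(lia)); have -> : (k - (k - (n - d)))%N = (n - d)%N by lia.
Qed.


Definition ent {R : realType} {n : nat} (X : 'M[R]_(2, n)) (r : 'I_2) (j : nat) : R :=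
  oapp (X r) 0 (insub j : option 'I_n).
Definition W {R : realType} {n : nat} (X : 'M[R]_(2, n)) (r : 'I_2) (t : nat) : R :=
  (if odd (t %/ n)%N then -1 else 1) * ent X r (t %% n)%N.
Definition D {R : realType} {n : nat} (X : 'M[R]_(2, n)) (s t : nat) : R :=
  W X 0 s * W X 1 t - W X 0 t * W X 1 s.
Definition aa {R : realType} {n : nat} (X : 'M[R]_(2, n)) (d s : nat) : R :=
  D X s (s + d)%N.

Lemma W_n {R : realType} {n : nat} (X : 'M[R]_(2, n)) r t : (0 < n)%N ->
  W X r (t + n) = - W X r t.
Proof.
move=> n0; rewrite /W divnDr ?dvdnn // divnn n0 addn1 /= modnDr.
by case: (odd _); rewrite ?mulN1r ?mul1r ?opprK.
Qed.

Lemma D_nr {R : realType} {n : nat} (X : 'M[R]_(2, n)) s t : (0 < n)%N ->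
  D X s (t + n) = - D X s t.
Proof. by move=> n0; rewrite /D !W_n //; ring. Qed.

Lemma D_nl {R : realType} {n : nat} (X : 'M[R]_(2, n)) s t : (0 < n)%N ->
  D X (s + n) t = - D X s t.
Proof. by move=> n0; rewrite /D !W_n //; ring. Qed.

Lemma D_anti {R : realType} {n : nat} (X : 'M[R]_(2, n)) s t : D X t s = - D X s t.
Proof. by rewrite /D; ring. Qed.

Lemma aa_per {R : realType} {n : nat} (X : 'M[R]_(2, n)) d s : (0 < n)%N ->
  aa X d (s + n) = aa X d s.
Proof.
by move=> n0; rewrite /aa -addnA [(n + d)%N]addnC addnA D_nl // D_nr // opprK.
Qed.

Lemma per_mod {R : realType} n (f : nat -> R) : (forall s, f (s + n)%N = f s) ->
  forall s, f s = f (s %% n)%N.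
Proof.
move=> hp s.
have h : forall q t, f (t + q * n)%N = f t.
  elim=> [|q IH] t; first by rewrite mul0n addn0.
  by rewrite mulSn addnCA addnC hp.
by rewrite {1}(divn_eq s n) addnC h.
Qed.

Lemma W_ord {R : realType} {n : nat} (X : 'M[R]_(2, n)) r (i : 'I_n) :
  W X r i = X r i.
Proof.
rewrite /W divn_small ?modn_small ?ltn_ord //= mul1r /ent.
by rewrite valK.
Qed.

Lemma D_ord {R : realType} {n : nat} (X : 'M[R]_(2, n)) (i j : 'I_n) :
  D X i j = plucker X i j.
Proof. by rewrite /D !W_ord. Qed.

Lemma aa_pl {R : realType} {n : nat} (X : 'M[R]_(2, n)) d s :
  (s < n)%N -> (0 < d < n)%N ->
  exists i j : 'I_n, (i < j)%N /\ aa X d s = plucker X i j.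
Proof.
move=> sn /andP [d0 dn]; have n0 : (0 < n)%N by lia.
rewrite /aa; case: (ltnP (s + d) n) => h.
  exists (Ordinal sn), (Ordinal h); split; first by rewrite /=; lia.
  by rewrite -D_ord.
have h1 : (s + d - n < n)%N by lia.
exists (Ordinal h1), (Ordinal sn); split; first by rewrite /=; lia.
rewrite -D_ord /=.
have e : (s + d = (s + d - n) + n)%N by lia.
by rewrite [in LHS]e D_nr // D_anti opprK.
Qed.

Lemma aa_n {R : realType} {n : nat} (X : 'M[R]_(2, n)) s : (0 < n)%N ->
  aa X n s = 0.
Proof.
move=> n0; rewrite /aa D_nr //.
by rewrite /D subrr oppr0.
Qed.

Lemma aa_0 {R : realType} {n : nat} (X : 'M[R]_(2, n)) s : aa X 0 s = 0.
Proof. by rewrite /aa addn0 /D subrr. Qed.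

Lemma aa_sym {R : realType} {n : nat} (X : 'M[R]_(2, n)) d s : (0 < n)%N -> (d <= n)%N ->
  aa X (n - d)%N (s + d)%N = aa X d s.
Proof.
move=> n0 dn; rewrite /aa.
have -> : (s + d + (n - d) = s + n)%N by lia.
by rewrite D_nr // D_anti opprK.
Qed.

Lemma ptolemy {R : realType} {n : nat} (X : 'M[R]_(2, n)) d s : (0 < d)%N ->
  aa X d s * aa X d s.+1 =
  aa X 1 s * aa X 1 (s + d)%N + aa X d.+1 s * aa X d.-1 s.+1.
Proof.
move=> d0; rewrite /aa.
have -> : (s.+1 + d = (s + d).+1)%N by lia.
have -> : (s.+1 + d.-1 = s + d)%N by lia.
have -> : (s + d.+1 = (s + d).+1)%N by lia.
rewrite !addn1 /D; ring.
Qed.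


Lemma pl_bounds {R : realType} {n : nat} (X : 'M[R]_(2, n)) (i j : 'I_n) : (i < j)%N ->
  min_plucker X <= plucker X i j <= max_plucker X.
Proof.
move=> ij; apply/andP; split.
  exact: (@bigmin_le_cond _ _ _ (max_plucker X) (i, j)
    (fun p : 'I_n * 'I_n => (p.1 < p.2)%N) (fun p => plucker X p.1 p.2) ij).
exact: (@le_bigmax_cond _ _ _ 0 (i, j)
    (fun p : 'I_n * 'I_n => (p.1 < p.2)%N) (fun p => plucker X p.1 p.2) ij).
Qed.

Lemma min_pos {R : realType} {n : nat} (X : 'M[R]_(2, n)) : (1 < n)%N ->
  totally_positive X -> 0 < min_plucker X.
Proof.
move=> n1 tp.
have i0 : (0 < n)%N by lia.
have h01 := tp (Ordinal i0) (Ordinal n1) isT.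
rewrite /min_plucker; apply: lt_bigmin.
  apply: lt_le_trans h01 _.
  by have /andP [_ ->] := @pl_bounds R n X (Ordinal i0) (Ordinal n1) isT.
by move=> [i j] /= ij; apply: tp.
Qed.

Lemma aa_bounds {R : realType} {n : nat} (X : 'M[R]_(2, n)) d s : totally_positive X ->
  (0 < d < n)%N ->
  0 < aa X d s /\ min_plucker X <= aa X d s <= max_plucker X.
Proof.
move=> tp hd; have n0 : (0 < n)%N by lia.
rewrite (per_mod n (aa X d) (fun s => aa_per X d s n0)).
have [i [j [ij ->]]] := aa_pl X d (s %% n)%N (ltn_pmod s n0) hd.
by split; [exact: tp | exact: pl_bounds].
Qed.

Lemma core {R : realType} {n : nat} (X : 'M[R]_(2, n)) :
  (3 <= n)%N -> odd n -> totally_positive X ->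
  min_plucker X * (sn R n n./2 / sn R n 1) <= max_plucker X /\
  (max_plucker X = min_plucker X * (sn R n n./2 / sn R n 1) ->
   forall i j : 'I_n, (i < j)%N ->
     plucker X i j = min_plucker X / sn R n 1 * sn R n (j - i)%N).
Proof.
move=> n3 on tp.
set m := min_plucker X; set M := max_plucker X; set k := n./2.
have hn : n = k.*2.+1 by rewrite /k -{1}(odd_double_half n) on.
have k0 : (0 < k)%N by move: n3; rewrite hn; lia.
have kn : (0 < k < n)%N by rewrite k0 /=; rewrite [X in (_ < X)%N]hn; lia.
have n0 : (0 < n)%N by lia.
have n1 : (1 < n)%N by lia.
have m0 : 0 < m by apply: min_pos.
have ab := fun d s hd => aa_bounds X d s tp hd.
pose G d := geo n (aa X d).
have Gpos : forall d, 0 < G d by move=> d; apply: geo_gt0.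
have aper : forall d s, aa X d (s + n)%N = aa X d s by move=> d s; apply: aa_per.
have apos : forall d s, (0 < d < n)%N -> 0 < aa X d s by move=> d s hd; case: (ab d s hd).
have Gge : forall d, (0 < d < n)%N -> m <= G d.
  move=> d hd; apply: geo_ge => // s _; case: (ab d s hd) => _ /andP [].
  by [].
have Gle : forall d, (0 < d < n)%N -> G d <= M.
  move=> d hd; apply: geo_le => // s _; first exact: apos.
  by case: (ab d s hd) => _ /andP [].
have s10 : 0 < sn R n 1 by apply: sn_gt0.
pose c d := sn R n d / sn R n 1.
pose r d := if (0 < d < n)%N then G d / m else 0.
have rE : forall d, (0 < d < n)%N -> r d = G d / m by move=> d hd; rewrite /r hd.
have r0 : r 0%N = 0 by [].
have rn : r n = 0 by rewrite /r ltnn andbF.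
have c0 : c 0%N = 0 by rewrite /c sn0 mul0r.
have cn : c n = 0 by rewrite /c snn // mul0r.
have cpos : forall d, (0 < d < n)%N -> 0 < c d.
  by move=> d /andP [d0 dn]; rewrite /c divr_gt0 // sn_gt0.
have rpos : forall d, (0 < d < n)%N -> 0 < r d.
  by move=> d hd; rewrite rE // divr_gt0.
have cid : forall d, (0 < d < n)%N -> c d ^+ 2 - c d.+1 * c d.-1 = 1.
  move=> d /andP [d0 _]; have := sn_id R n d d0; rewrite /c => e.
  have s1n : sn R n 1 != 0 by rewrite gt_eqF.
  have -> : (sn R n d / sn R n 1) ^+ 2 - sn R n d.+1 / sn R n 1 * (sn R n d.-1 / sn R n 1)
    = (sn R n d ^+ 2 - sn R n d.+1 * sn R n d.-1) / sn R n 1 ^+ 2 by field.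
  by rewrite e divff // expf_neq0.
have csym : forall d, (0 < d < n)%N -> c (n - d)%N = c d.
  by move=> d /andP [_ dn]; rewrite /c snB // ltnW.
have Gsym : forall d, (0 < d < n)%N -> G (n - d)%N = G d.
  move=> d /andP [_ dn]; rewrite /G -(geo_shift R n (aa X (n - d)%N) d (aper _)).
  by apply: geo_ext => s _; rewrite aa_sym // ltnW.
have rsym : forall d, (0 < d < n)%N -> r (n - d)%N = r d.
  move=> d hd; rewrite !rE ?Gsym //; move: hd; lia.
pose A d s := aa X 1 s * aa X 1 (s + d)%N.
pose B d s := aa X d.+1 s * aa X d.-1 s.+1.
have h1 : (0 < 1 < n)%N by [].
have Apos : forall d s, 0 < A d s by move=> d s; rewrite /A mulr_gt0 ?apos.
have Age : forall d s, m * m <= A d s.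
  move=> d s; rewrite /A; apply: ler_pM; [exact: ltW | exact: ltW | |].
    by case: (ab 1%N s h1) => _ /andP [].
  by case: (ab 1%N (s + d)%N h1) => _ /andP [].
have Bpos : forall d s, (1 < d)%N -> (d.+1 < n)%N -> 0 < B d s.
  move=> d s d1 dn; rewrite /B mulr_gt0 // apos //; move: d1 dn; lia.
have eGG : forall d, (0 < d < n)%N ->
    G d * G d = geo n (fun s => A d s + B d s).
  move=> d hd; rewrite {2}/G -(geo_shift R n (aa X d) 1 (aper d)) -geo_mul.
  - apply: geo_ext => s _; rewrite addn1 /A /B ptolemy //; by case/andP: hd.
  - by move=> s _; apply: apos.
  - by move=> s _; apply: apos.
have eB : forall d, (1 < d)%N -> (d.+1 < n)%N -> geo n (B d) = G d.+1 * G d.-1.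
  move=> d d1 dn.
  have hm : (0 < d.-1 < n)%N by move: d1 dn; lia.
  have hp : (0 < d.+1 < n)%N by move: d1 dn; lia.
  rewrite /B /G geo_mul; last by move=> s _; apply: apos.
    rewrite -(geo_shift R n (aa X d.-1) 1 (aper _)).
    by congr (_ * _); apply: geo_ext => s _; rewrite addn1.
  by move=> s _; apply: apos.
have chainG : forall d, (1 < d)%N -> (d.+1 < n)%N ->
    m * m + G d.+1 * G d.-1 <= G d * G d.
  move=> d d1 dn.
  have hd : (0 < d < n)%N by move: d1 dn; lia.
  have [hs _] := geo_super R n (A d) (B d) n0 (fun s _ => Apos d s)
    (fun s _ => Bpos d s d1 dn).
  rewrite eGG // -eB //; apply: le_trans hs; rewrite lerD2r.
  apply: geo_ge => //; try (move=> s _; exact: Age).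
  exact: mulr_gt0.
have rid : forall d, (0 < d < n)%N -> 1 <= r d ^+ 2 - r d.+1 * r d.-1.
  move=> d hd.
  have G1 : 1 <= G d / m by rewrite ler_pdivlMr // mul1r Gge.
  case: (posnP d.-1) => [e0|e0].
    have -> : r d.-1 = 0 by rewrite e0.
    rewrite mulr0 subr0 rE //; nra.
  case: (ltngtP d.+1 n) => [dn|dn|dn].
  - have d1 : (1 < d)%N by move: e0 hd; lia.
    have hm : (0 < d.-1 < n)%N by move: d1 dn; lia.
    have hp : (0 < d.+1 < n)%N by move: d1 dn; lia.
    rewrite !rE //.
    have := chainG d d1 dn.
    have Gm := Gpos d.-1; have Gp := Gpos d.+1.
    have -> : (G d / m) ^+ 2 - G d.+1 / m * (G d.-1 / m) =
      (G d * G d - G d.+1 * G d.-1) / (m * m) by field; rewrite gt_eqF.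
    move=> hc; rewrite ler_pdivlMr ?mulr_gt0 // mul1r; lra.
  - by move: dn hd; lia.
  - rewrite dn rn mul0r subr0 rE //; nra.
have cle := minprin R n r c n1 c0 cn r0 rn cpos rpos cid rid.
have ck := cle k kn; rewrite rE // ler_pdivlMr // in ck.
have GkM := Gle k kn.
rewrite -/(c k); split; first by rewrite mulrC; exact: le_trans ck GkM.
move=> hM.
have rk : r k = c k.
  apply/eqP; rewrite eq_le; apply/andP; split; last by rewrite rE // ler_pdivlMr.
  rewrite rE // ler_pdivrMr // mulrC -hM; exact: GkM.
have hall := spread R n k r c hn k0 cpos cle cid rid rsym csym rk.
have Gc : forall d, (0 < d < n)%N -> G d = m * c d.
  move=> d hd; have := hall d hd; rewrite rE // => e.
  by rewrite -e mulrC mulfVK // gt_eqF.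
have c1 : c 1%N = 1 by rewrite /c divff // gt_eqF.
have a1 : forall s, aa X 1 s = m.
  move=> s; rewrite (per_mod n (aa X 1) (aper 1%N)).
  apply: (geo_geE R n (aa X 1) m n0 m0) => //; last exact: ltn_pmod.
    by move=> t _; case: (ab 1%N t h1) => _ /andP [].
  by rewrite -/(G 1%N) Gc // c1 mulr1.
have Bper : forall d s, B d (s + n)%N = B d s.
  by move=> d s; rewrite /B -addSn !aper.
have Bc : forall d, (1 < d)%N -> (d.+1 < n)%N -> forall s, B d s = B d 0%N.
  move=> d d1 dn.
  have hd : (0 < d < n)%N by move: d1 dn; lia.
  have hm : (0 < d.-1 < n)%N by move: d1 dn; lia.
  have hp : (0 < d.+1 < n)%N by move: d1 dn; lia.
  have Ac : forall s, A d s = m * m by move=> s; rewrite /A !a1.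
  have gA : geo n (A d) = m * m.
    apply: geo_const => //; try (move=> s _; exact: Ac); exact: mulr_gt0.
  have heq : geo n (fun s => A d s + B d s) = geo n (A d) + geo n (B d).
    rewrite -eGG // gA eB // !Gc //.
    have e := cid d hd.
    apply/eqP; rewrite -subr_eq0.
    have -> : m * c d * (m * c d) - (m * m + m * c d.+1 * (m * c d.-1)) =
      m * m * (c d ^+ 2 - c d.+1 * c d.-1 - 1) by ring.
    by rewrite e subrr mulr0.
  have [_ hE] := geo_super R n (A d) (B d) n0 (fun s _ => Apos d s)
    (fun s _ => Bpos d s d1 dn).
  have hs := hE heq.
  move=> s; rewrite (per_mod n (B d) (Bper d)).
  have e := hs _ (ltn_pmod s n0); rewrite -(hs 0%N n0) !Ac in e.
  have mm : m * m != 0 by rewrite (gt_eqF (mulr_gt0 m0 m0)).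
  have q1 : m * m + B d (s %% n)%N != 0.
    by rewrite (gt_eqF (addr_gt0 (mulr_gt0 m0 m0) (Bpos d _ d1 dn))).
  have q2 : m * m + B d 0%N != 0.
    by rewrite (gt_eqF (addr_gt0 (mulr_gt0 m0 m0) (Bpos d _ d1 dn))).
  move/eqP: e; rewrite eqr_div // => /eqP e.
  by apply: (addrI (m * m)); apply: (mulfI mm); rewrite -e mulrC.
have odd_c : forall j, (j.*2.+1 < n)%N -> forall s, aa X j.*2.+1 s = aa X j.*2.+1 0%N.
  elim=> [|j IH] hj s; first by rewrite !a1.
  have d1 : (1 < j.*2.+2)%N by [].
  have dn : (j.*2.+3 < n)%N by move: hj; rewrite doubleS.
  have hb := Bc _ d1 dn s; rewrite /B /= in hb.
  have hj' : (j.*2.+1 < n)%N by move: hj; rewrite doubleS; lia.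
  rewrite (IH hj' s.+1) (IH hj' 1%N) in hb.
  have p : 0 < aa X j.*2.+1 0%N by apply: apos; rewrite /=; lia.
  have p' : aa X j.*2.+1 0%N != 0 by rewrite (gt_eqF p).
  rewrite doubleS; apply: (mulIf p'); exact: hb.
have allc : forall d, (0 < d < n)%N -> forall s, aa X d s = aa X d 0%N.
  move=> d hd s.
  case od: (odd d).
    have e : d = (d./2).*2.+1 by rewrite -{1}(odd_double_half d) od.
    rewrite e; apply: odd_c; rewrite -e; by case/andP: hd.
  have e : d = (d./2).*2 by rewrite -{1}(odd_double_half d) od.
  have e2 : (n - d)%N = (k - d./2)%N.*2.+1.
    move: hd; rewrite hn {1 2}e -!muln2; lia.
  have hnd : ((k - d./2)%N.*2.+1 < n)%N by rewrite -e2; move: hd; lia.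
  have dn : (d <= n)%N by case/andP: hd => _ /ltnW.
  have sy : forall t, aa X d t = aa X (n - d)%N (t + d)%N.
    move=> t; rewrite -(aper d t).
    have -> : (t + n = t + d + (n - d))%N by lia.
    have := aa_sym X (n - d)%N (t + d)%N n0 (leq_subr d n).
    by rewrite subKn.
  by rewrite !sy e2 !odd_c.
move=> i j ij.
have hd : (0 < j - i < n)%N by have := ltn_ord j; lia.
rewrite -D_ord.
have -> : D X i j = aa X (j - i)%N i by rewrite /aa subnKC // ltnW.
rewrite allc //.
have -> : aa X (j - i)%N 0%N = G (j - i)%N.
  apply/esym/geo_const => //; try (move=> s _; exact: allc).
  exact: apos.
by rewrite Gc // /c; ring.
Qed.


Lemma I2_cases (r : 'I_2) : r = 0 \/ r = 1.
Proof. by case: r => [[|[|//]]] H; [left|right]; apply/val_inj. Qed.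

Lemma sub_pl {R : realType} {n : nat} (X Y : 'M[R]_(2, n)) (i0 i1 : 'I_n) (lam : R) :
  lam != 0 -> (forall i j, plucker X i j = lam * plucker Y i j) ->
  plucker Y i0 i1 != 0 -> (X <= Y)%MS.
Proof.
move=> l0 hX hY.
pose P := \matrix_(r < 2, l < 2)
  ((if l == 0 then X r i0 * Y 1 i1 - X r i1 * Y 1 i0
    else X r i1 * Y 0 i0 - X r i0 * Y 0 i1) / plucker Y i0 i1).
have -> : X = P *m Y; last exact: submxMl.
apply/matrixP => r j; rewrite !mxE big_ord_recl big_ord1 !mxE /=.
have e1 : lift ord0 ord0 = 1 :> 'I_2 by apply/val_inj.
have e0 : ord0 = 0 :> 'I_2 by apply/val_inj.
rewrite e1 e0 /=.
have id : plucker X i0 i1 * X r j = plucker X j i1 * X r i0 + plucker X i0 j * X r i1.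
  by rewrite /plucker; case: (I2_cases r) => ->; ring.
rewrite !hX in id.
have id2 : plucker Y i0 i1 * X r j = plucker Y j i1 * X r i0 + plucker Y i0 j * X r i1.
  apply: (mulfI l0); rewrite mulrA id; ring.
apply: (mulfI hY); rewrite id2 /plucker; field.
by move: hY; rewrite /plucker.
Qed.


Theorem mainTheorem3 (R : realType) (n : nat) :
  (3 <= n)%N -> odd n ->
  [/\ totally_positive (cyclicC R n),
      (forall X : 'M[R]_(2, n), totally_positive X ->
         Eratio (cyclicC R n) <= Eratio X) &
      (forall X : 'M[R]_(2, n), totally_positive X ->
         Eratio X = Eratio (cyclicC R n) -> (X == cyclicC R n)%MS)].
Proof.
move=> n3 on.
have n0 : (0 < n)%N by lia.
have n1 : (1 < n)%N by lia.
have s10 : 0 < sn R n 1 by apply: sn_gt0.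
have tpC : totally_positive (cyclicC R n).
  move=> i j ij; rewrite pluckerC; last exact: ltnW.
  by apply: sn_gt0; have := ltn_ord j; lia.
have EC : Eratio (cyclicC R n) = sn R n n./2 / sn R n 1.
  by rewrite /Eratio (maxPC R n n3 on) (minPC R n n3 on).
split => //.
  move=> X tp; have [h _] := core X n3 on tp.
  have m0 := min_pos X n1 tp.
  by rewrite EC /Eratio ler_pdivlMr // mulrC.
move=> X tp he.
have m0 := min_pos X n1 tp.
have [_ hb] := core X n3 on tp.
have hM : max_plucker X = min_plucker X * (sn R n n./2 / sn R n 1).
  by move: he; rewrite EC /Eratio => <-; rewrite mulrC mulfVK // gt_eqF.
have hX := hb hM.
set lam := min_plucker X / sn R n 1.
have l0 : 0 < lam by apply: divr_gt0.
have hall : forall i j, plucker X i j = lam * plucker (cyclicC R n) i j.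
  move=> i j; case: (ltngtP i j) => [ij|ji|ij].
  - by rewrite hX // (pluckerC R n i j (ltnW ij)).
  - have a1 : forall Y : 'M[R]_(2, n), plucker Y i j = - plucker Y j i.
      by move=> Y; rewrite /plucker; ring.
    rewrite !a1 hX // (pluckerC R n j i (ltnW ji)).
    by rewrite /lam; ring.
  - have -> : i = j by apply/val_inj.
    by rewrite /plucker !subrr mulr0.
have i0 : (0 < n)%N by [].
have pC : plucker (cyclicC R n) (Ordinal i0) (Ordinal n1) != 0.
  by rewrite pluckerC // gt_eqF // sn_gt0.
have pX : plucker X (Ordinal i0) (Ordinal n1) != 0.
  by rewrite hall mulf_neq0 // gt_eqF.
have lne : lam != 0 by rewrite gt_eqF.
apply/andP; split.
  exact: (sub_pl X (cyclicC R n) (Ordinal i0) (Ordinal n1) lam lne).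
apply: (sub_pl (cyclicC R n) X (Ordinal i0) (Ordinal n1) lam^-1) => //.
  by rewrite invr_neq0 // gt_eqF.
by move=> i j; rewrite hall mulKf // gt_eqF.
Qed.
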